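(* A magma $(Q,\cdot)$ is a Ward quasigroup if and only if it is cancellative and satisfies $(xz)(yz)=xy$ for all $x,y,z\in Q$.
   Context: A Ward quasigroup is a quasigroup (a magma in which $ax=b$ and $ya=b$ have unique solutions for all $a,b$) satisfying $(xz)(yz)=xy$ for all $x,y,z$. A magma is cancellative if $ax=ay\Rightarrow x=y$ and $xa=ya\Rightarrow x=y$. *)

(* Defs.v *)
Definition is_quasigroup {Q : Type} (op : Q -> Q -> Q) : Prop :=
  forall a b : Q,
    (exists x, op a x = b /\ forall x', op a x' = b -> x' = x) /\
    (exists y, op y a = b /\ forall y', op y' a = b -> y' = y).

Definition ward_identity {Q : Type} (op : Q -> Q -> Q) : Prop :=
  forall x y z : Q, op (op x z) (op y z) = op x y.

Definition is_ward_quasigroup {Q : Type} (op : Q -> Q -> Q) : Prop :=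
  is_quasigroup op /\ ward_identity op.

Definition is_cancellative {Q : Type} (op : Q -> Q -> Q) : Prop :=
  (forall a x y : Q, op a x = op a y -> x = y) /\
  (forall a x y : Q, op x a = op y a -> x = y).

(* Main.v *)
Require Import Defs.
From Stdlib Require Import Setoid.

Theorem lemma6p4 (Q : Type) (op : Q -> Q -> Q) :
  is_ward_quasigroup op <-> (is_cancellative op /\ ward_identity op).
Proof.
  split.
  - intros [Hq Hw]. split; [|exact Hw]. split.
    + intros a x y H. destruct (Hq a (op a x)) as [[s [_ Hs]] _].
      rewrite (Hs x eq_refl), (Hs y (eq_sym H)). reflexivity.
    + intros a x y H. destruct (Hq a (op x a)) as [_ [s [_ Hs]]].
      rewrite (Hs x eq_refl), (Hs y (eq_sym H)). reflexivity.
  - intros [[Hl Hr] Hw]. split; [|exact Hw].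
    assert (Hid : forall b c, op c (op b b) = c).
    { intros b c. apply (Hl (op b b)).
      pose proof (Hw (op b b) c (op b b)) as H1.
      pose proof (Hw b b b) as H2. rewrite H2 in H1. exact H1. }
    assert (Hsq : forall x z, op x x = op z z).
    { intros x z. apply (Hl x). rewrite Hid, Hid. reflexivity. }
    intros a b. set (e := op a a).
    assert (He : forall y, op y y = e) by (intros; apply Hsq).
    assert (Hex : forall x y, op e (op x y) = op y x).
    { intros x y. rewrite <- (He y). apply Hw. }
    assert (Hre : forall c, op c e = c) by (intros; unfold e; apply Hid).
    assert (Hee : forall x, op e (op e x) = x).
    { intros x. rewrite Hex. apply Hre. }
    split.
    + exists (op (op e b) (op e a)). split.
      * rewrite <- (Hee a) at 1. rewrite Hw. apply Hee.
      * intros x' Hx'. apply (Hl a). rewrite Hx'.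
        rewrite <- (Hee a) at 1. rewrite Hw. symmetry. apply Hee.
    + exists (op b (op e a)). split.
      * rewrite <- (Hee a) at 2. rewrite Hw. apply Hre.
      * intros y' Hy'. apply (Hr a). rewrite Hy'.
        rewrite <- (Hee a) at 2. rewrite Hw. symmetry. apply Hre.
Qed.
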